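(* Let $r\ge 2$ be an integer and let $G$ be a connected $r$-regular graph of order $n$. (i) If $G$ is not a Moore graph of degree $r$ and diameter $2$, then $$\gamma_{\times r}(G)\le \frac{r^2-1}{r^2}\,n .$$ (ii) If $G$ is a Moore graph of degree $r$ and diameter $2$ (so $n=r^2+1$), then $$\gamma_{\times r}(G)=\frac{r^2}{r^2+1}\,n=r^2 .$$
   Context: All graphs are finite and simple. For a vertex $v$, $N[v]=\{v\}\cup\{u\in V(G): uv\in E(G)\}$ is its closed neighborhood. For a positive integer $k$, a $k$-tuple dominating set of $G$ is a set $S\subseteq V(G)$ with $|N[v]\cap S|\ge k$ for every $v\in V(G)$; $\gamma_{\times k}(G)$ denotes the minimum cardinality of such a set. A Moore graph of degree $r$ and diameter $2$ is an $r$-regular graph of diameter $2$ with exactly $1+r+r(r-1)=r^2+1$ vertices. *)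

(* Defs.v *)
From mathcomp Require Import all_boot.
Set Implicit Arguments. Unset Strict Implicit. Unset Printing Implicit Defensive.

Definition simple_graph (T : finType) (e : rel T) : Prop :=
  symmetric e /\ irreflexive e.

Definition cnbhd (T : finType) (e : rel T) (v : T) : {set T} :=
  [set u | (u == v) || e v u].

Definition onbhd (T : finType) (e : rel T) (v : T) : {set T} :=
  [set u | e v u].

Definition regular (T : finType) (e : rel T) (r : nat) : Prop :=
  forall v : T, #|onbhd e v| = r.

Definition connected (T : finType) (e : rel T) : Prop :=
  forall u v : T, connect e u v.

Definition within2 (T : finType) (e : rel T) (u v : T) : bool :=
  (u == v) || e u v || [exists w, e u w && e w v].

Definition diameter2 (T : finType) (e : rel T) : Prop :=
  (forall u v : T, within2 e u v) /\ (exists u v : T, (u != v) && ~~ e u v).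

Definition moore2 (T : finType) (e : rel T) (r : nat) : Prop :=
  regular e r /\ diameter2 e /\ #|T| = r ^ 2 + 1.

Definition ktuple_dom (T : finType) (e : rel T) (k : nat) (S : {set T}) : bool :=
  [forall v, k <= #|cnbhd e v :&: S|].

(* gamma_{x k}(G): minimum size of a k-tuple dominating set
   (#|T| if none exists; irrelevant here since V(G) is one when k <= delta+1) *)
Definition gamma_k (T : finType) (e : rel T) (k : nat) : nat :=
  \big[minn/#|T|]_(S : {set T} | ktuple_dom e k S) #|S|.

(* Main.v *)
Require Import Defs.
From mathcomp Require Import all_boot zify.
Set Implicit Arguments. Unset Strict Implicit.

Section G.
Variables (T : finType) (e : rel T) (r : nat).
Hypothesis (esym : symmetric e) (eirr : irreflexive e).
Hypothesis (reg : regular e r).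

Lemma card_bigcup_le (I : finType) (P : pred I) (F : I -> {set T}) :
  #|\bigcup_(i | P i) F i| <= \sum_(i | P i) #|F i|.
Proof.
elim/big_rec2: _ => [|i n U _ leUn]; first by rewrite cards0.
by rewrite (leq_trans (leq_card_setU (F i) U).1) ?leq_add2l.
Qed.

Definition B2 v := [set x | within2 e v x].

Lemma within2_sym u v : within2 e u v = within2 e v u.
Proof.
rewrite /within2 eq_sym esym; congr (_ || _).
apply/existsP/existsP => [[w /andP[h1 h2]]|[w /andP[h1 h2]]]; exists w.
  by rewrite (esym v w) h2 (esym w u) h1.
by rewrite (esym u w) h2 (esym w v) h1.
Qed.

Lemma card_cnbhd v : #|cnbhd e v| = r.+1.
Proof.
have -> : cnbhd e v = v |: onbhd e v.
  by apply/setP=> x; rewrite !inE.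
by rewrite cardsU1 reg inE eirr.
Qed.

Lemma card_B2 v : #|B2 v| <= r ^ 2 + 1.
Proof.
have sub : B2 v \subset v |: (onbhd e v :|: \bigcup_(w in onbhd e v) (onbhd e w :\ v)).
  apply/subsetP=> x; rewrite !inE /within2 => /orP[/orP[/eqP E|h]|/existsP[w /andP[h1 h2]]].
    by rewrite E eqxx.
    by rewrite h orbT.
  case: (x =P v) => //= nxv; apply/orP; right; apply/bigcupP; exists w; first by rewrite inE.
  by rewrite !inE h2 andbT; apply/eqP.
apply: (leq_trans (subset_leq_card sub)).
apply: (leq_trans (leq_card_setU _ _).1).
rewrite cards1 -addnC leq_add2r.
apply: (leq_trans (leq_card_setU _ _).1).
rewrite reg.
apply: (@leq_trans (r + \sum_(w in onbhd e v) (r - 1))).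
  rewrite leq_add2l; apply: (leq_trans (@card_bigcup_le T (fun w => w \in onbhd e v) (fun w => onbhd e w :\ v))).
  apply: leq_sum => w; rewrite inE => hw.
  have := cardsD1 v (onbhd e w); rewrite reg inE esym hw /=.
  by move=> ->; rewrite add1n subn1 /=.
rewrite sum_nat_const reg; case: r => [|k] //=; nia.
Qed.

Definition packing (D : {set T}) := forall d d', d \in D -> d' \in D -> d != d' -> ~~ within2 e d d'.

Lemma packing_le1 D : packing D -> forall v, #|cnbhd e v :&: D| <= 1.
Proof.
move=> hD v; rewrite leqNgt; apply/card_gt1P => [[d [d' [hd hd' ne]]]].
move: hd hd'; rewrite !inE => /andP[h1 h2] /andP[h3 h4].
move: (hD _ _ h2 h4 ne); rewrite /within2.
move: h1 h3 => /orP[/eqP ->|h1] /orP[/eqP ->|h3].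
- by rewrite eqxx.
- by rewrite h3 orbT.
- by rewrite esym h1 orbT.
- by apply/negP; rewrite negbK; apply/orP; right; apply/existsP; exists v; rewrite esym h1 h3.
Qed.

Lemma packing_dom D : packing D -> ktuple_dom e r (~: D).
Proof.
move=> hD; apply/forallP=> v.
have := cardsID D (cnbhd e v); rewrite card_cnbhd setDE.
have := @packing_le1 D hD v; lia.
Qed.


Definition covered (D : {set T}) := [set x | [exists d in D, within2 e d x]].

Lemma within2_refl x : within2 e x x.
Proof. by rewrite /within2 eqxx. Qed.

Lemma sub_covered (D : {set T}) : D \subset covered D.
Proof. by apply/subsetP=> d hd; rewrite inE; apply/existsP; exists d; rewrite hd within2_refl. Qed.

Lemma step (D : {set T}) : connected e -> D != set0 -> covered D != setT ->
  exists v, v \notin covered D /\ #|B2 v :\: covered D| <= r ^ 2 - 1.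
Proof.
move=> conn /set0Pn[d hd] /eqP hC.
set C := covered D.
have [y hy] : exists y, y \notin C.
  case: (boolP [exists y, y \notin C]) => [/existsP//|/existsPn h].
  by exfalso; apply: hC; apply/setP=> z; rewrite in_setT; exact: negbNE (h z).
case: (boolP [exists x, [exists y, (x \in C) && (y \notin C) && e x y]]) => [|/existsPn h].
  move=> /existsP[x /existsP[z /andP[/andP[hx hz] exz]]].
  exists z; split => //.
  move: (hx); rewrite inE => /existsP[d' /andP[hd' w2]].
  move: w2; rewrite /within2 => /orP[/orP[/eqP E|h]|/existsP[w /andP[h1 h2]]].
  - case/negP: hz; rewrite inE; apply/existsP; exists d'; rewrite hd' /within2 E exz.
    by rewrite orbT.
  - case/negP: hz; rewrite inE; apply/existsP; exists d'; rewrite hd' /within2.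
    by apply/orP; right; apply/existsP; exists x; rewrite h exz.
  have wC : w \in C by rewrite inE; apply/existsP; exists d'; rewrite hd' /within2 h1 orbT.
  have xB : x \in B2 z by rewrite inE /within2 esym exz orbT.
  have wB : w \in B2 z :\ x.
    rewrite !inE /within2; apply/andP; split.
      by apply/eqP=> E; move: h2; rewrite E eirr.
    by apply/orP; right; apply/existsP; exists x; rewrite esym exz esym h2.
  have sub : B2 z :\: C \subset (B2 z :\ x) :\ w.
    apply/subsetP=> t; rewrite in_setD => /andP[tC tB]; rewrite !in_setD1 tB andbT.
    by apply/andP; split; apply/eqP=> E; move: tC; rewrite E ?wC ?hx.
  have := subset_leq_card sub.
  have := cardsD1 x (B2 z); have := cardsD1 w (B2 z :\ x); rewrite xB wB.
  have := card_B2 z; lia.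
exfalso.
have cl : closed e C.
  move=> a b hab; case: (boolP (a \in C)) => ha; case: (boolP (b \in C)) => hb //.
    by move: (h a) => /existsPn /(_ b); rewrite ha hb hab.
  by move: (h b) => /existsPn /(_ a); rewrite ha hb esym hab.
have dC : d \in C by apply: (subsetP (sub_covered D)).
by move: (closed_connect cl (conn d y)); rewrite dC (negbTE hy).
Qed.

Lemma covered_add v (D : {set T}) : covered (v |: D) = B2 v :|: covered D.
Proof.
apply/setP=> x; rewrite !inE; apply/existsP/orP.
  move=> [d /andP[hd h]]; move: hd; rewrite !inE => /orP[/eqP E|hd].
    by left; rewrite -E.
  by right; apply/existsP; exists d; rewrite hd.
move=> [h|/existsP[d /andP[hd h]]]; first by exists v; rewrite !inE eqxx h.
by exists d; rewrite !inE hd orbT.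
Qed.

Lemma grow k (D : {set T}) : #|~: covered D| <= k -> packing D -> connected e -> D != set0 ->
  #|covered D| <= 2 + #|D| * (r ^ 2 - 1) ->
  exists D', [/\ packing D', D \subset D', covered D' = setT &
                #|covered D'| <= 2 + #|D'| * (r ^ 2 - 1)].
Proof.
elim: k D => [|k IH] D hk hD conn hne hI.
  exists D; split => //; last apply/setP=> x; rewrite ?inE ?subxx //.
  by move: hk; rewrite leqn0 cards_eq0 => /eqP /setP /(_ x); rewrite !inE => /negbFE.
case: (boolP (covered D == setT)) => [/eqP hC|hC]; first by exists D.
have [v [hv hcard]] := @step D conn hne hC.
have vD : v \notin D by apply: contra hv; apply: (subsetP (sub_covered D)).
have [D' [p1 p2 p3 p4]] : exists D', [/\ packing D', v |: D \subset D', covered D' = setT &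
                #|covered D'| <= 2 + #|D'| * (r ^ 2 - 1)].
  apply: IH.
  - have sub : ~: covered (v |: D) \subset (~: covered D) :\ v.
      apply/subsetP=> t; rewrite covered_add !inE negb_or => /andP[h1 h2]; rewrite h2 andbT.
      by apply/eqP=> E; move: h1; rewrite E within2_refl.
    have := subset_leq_card sub; have := cardsD1 v (~: covered D); rewrite inE hv.
    lia.
  - move=> a b; rewrite !inE => /orP[/eqP->|ha] /orP[/eqP->|hb] ne.
    + by rewrite eqxx in ne.
    + by apply: contra hv => h; rewrite inE; apply/existsP; exists b; rewrite hb within2_sym.
    + by apply: contra hv => h; rewrite inE; apply/existsP; exists a; rewrite ha.
    + exact: hD.
  - exact: conn.
  - by apply/set0Pn; exists v; rewrite !inE eqxx.
  - rewrite covered_add cardsU1 vD.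
    have E : B2 v :|: covered D = (B2 v :\: covered D) :|: covered D.
      by apply/setP=> t; rewrite !in_setU in_setD; case: (t \in covered D); case: (t \in B2 v).
    rewrite E; have := leq_card_setU (B2 v :\: covered D) (covered D) => [[le _]].
    move: le hcard hI; nia.
exists D'; split => //; apply: subset_trans p2; apply/subsetP=> t ht; by rewrite !inE ht orbT.
Qed.

End G.

Lemma gamma_le (T : finType) (e : rel T) r (S : {set T}) :
  ktuple_dom e r S -> gamma_k e r <= #|S|.
Proof.
move=> h; rewrite /gamma_k.
have : S \in index_enum {set T} by rewrite mem_index_enum.
elim: (index_enum _) => [//|a s IH]; rewrite inE big_cons => /orP[/eqP<-|hs].
  by rewrite h geq_minl.
by case: ifP => _; [rewrite geq_min IH ?orbT | apply: IH].
Qed.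

Lemma gamma_ge (T : finType) (e : rel T) r m :
  m <= #|T| -> (forall S : {set T}, ktuple_dom e r S -> m <= #|S|) -> m <= gamma_k e r.
Proof.
move=> h1 h2; rewrite /gamma_k; elim/big_ind: _ => //.
by move=> x y hx hy; rewrite leq_min hx hy.
Qed.

Lemma packing1 (T : finType) (e : rel T) u : packing e [set u].
Proof. by move=> d d'; rewrite !inE => /eqP-> /eqP->; rewrite eqxx. Qed.

Lemma covered1 (T : finType) (e : rel T) u : covered e [set u] = B2 e u.
Proof.
apply/setP=> x; rewrite !inE; apply/existsP/idP => [[d]|h]; last by exists u; rewrite inE eqxx.
by rewrite inE => /andP[/eqP-> ->].
Qed.

Theorem theorem5 (T : finType) (e : rel T) (r : nat) :
  2 <= r -> simple_graph e -> connected e -> regular e r ->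
  (~ moore2 e r -> gamma_k e r * r ^ 2 <= (r ^ 2 - 1) * #|T|) /\
  (moore2 e r -> gamma_k e r * (r ^ 2 + 1) = r ^ 2 * #|T| /\ gamma_k e r = r ^ 2).
Proof.
move=> hr [esym eirr] conn reg.
have hR : 4 <= r ^ 2 by rewrite (_ : 4 = 2 ^ 2) // leq_exp2r.
have fromD : forall D : {set T}, packing e D -> #|T| <= #|D| * r ^ 2 ->
    gamma_k e r * r ^ 2 <= (r ^ 2 - 1) * #|T|.
  move=> D hD hn; have := gamma_le (packing_dom esym eirr reg hD).
  have := cardsC D; move: hn hR; set R := r ^ 2; set n := #|T|; nia.
split.
  move=> nM.
  case: (boolP [exists u, exists v, ~~ within2 e u v]).
    move=> /existsP[u /existsP[v huv]].
    have hC : covered e [set u] != setT.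
      by apply/eqP=> /setP /(_ v); rewrite covered1 !inE (negbTE huv).
    have hI : #|covered e [set u]| <= 2 + #|[set u]| * (r ^ 2 - 1).
      by rewrite covered1 cards1; have := card_B2 esym reg u; lia.
    have hne : [set u] != set0 by apply/set0Pn; exists u; rewrite inE.
    have [D' [p1 p2 p3 p4]] := grow esym eirr reg (leqnn _) (@packing1 T e u) conn hne hI.
    have h2 : 2 <= #|D'|.
      rewrite ltnNge; apply/negP => h1.
      have : [set u] == D' by rewrite eqEcard p2 cards1.
      by move/eqP=> E; move: hC; rewrite E p3 eqxx.
    apply: (fromD D' p1); move: p4; rewrite p3 cardsT; move: h2 hR; set R := r ^ 2; nia.
  move=> /existsPn hall.
  case: (posnP #|T|) => [n0|npos].
    by apply: (fromD set0) => //; [move=> d d'; rewrite inE | rewrite n0].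
  have /card_gt0P[u _] := npos.
  have hB : B2 e u = setT.
    by apply/setP=> x; rewrite !inE; move: (hall u) => /existsPn /(_ x); rewrite negbK.
  have := card_B2 esym reg u; rewrite hB cardsT => hn.
  apply: (fromD _ (@packing1 T e u)); rewrite cards1 mul1n.
  rewrite leq_eqVlt in hn; case/orP: hn => [/eqP hn|]; last by rewrite addn1 ltnS.
  exfalso; apply: nM; split=> //; split=> //; split.
    by move=> a b; move: (hall a) => /existsPn /(_ b); rewrite negbK.
  have [v hv] : exists v, v \notin cnbhd e u.
    case: (boolP [exists v, v \notin cnbhd e u]) => [/existsP//|/existsPn h].
    have : [set: T] \subset cnbhd e u by apply/subsetP=> x _; move: (h x); rewrite negbK.
    move/subset_leq_card; rewrite cardsT hn (card_cnbhd eirr reg); move: hR hr.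
    move=> _ h2 h3; exfalso; move: h3; rewrite -mulnn; nia.
  exists u, v; move: hv; rewrite inE negb_or => /andP[h1 h2].
  by rewrite eq_sym h1.
move=> [_ [[dall _] hn]].
have hT : 0 < #|T| by rewrite hn addn1.
have /card_gt0P[u _] := hT.
have hle : gamma_k e r <= r ^ 2.
  have := gamma_le (packing_dom esym eirr reg (@packing1 T e u)).
  by have := cardsC [set u]; rewrite cards1 hn; lia.
have hge : r ^ 2 <= gamma_k e r.
  apply: gamma_ge; first by rewrite hn leq_addr.
  move=> S hS.
  have h1 : #|~: S| <= 1.
    rewrite leqNgt; apply/card_gt1P => [[d [d' [hd hd' ne]]]].
    have [v [vd vd']] : exists v, d \in cnbhd e v /\ d' \in cnbhd e v.
      move: (dall d d'); rewrite /within2 => /orP[/orP[/eqP E|h]|/existsP[w /andP[h1 h2]]].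
      - by rewrite E eqxx in ne.
      - by exists d; rewrite !inE eqxx h orbT.
      - by exists w; rewrite !inE esym h1 h2 !orbT.
    move/forallP: hS => /(_ v) hv.
    have := cardsID S (cnbhd e v); rewrite (card_cnbhd eirr reg).
    have : 1 < #|cnbhd e v :\: S|.
      by apply/card_gt1P; exists d, d'; rewrite !in_setD -!in_setC hd hd' vd vd' ne.
    lia.
  have := cardsC S; rewrite hn; lia.
have E : gamma_k e r = r ^ 2 by apply/eqP; rewrite eqn_leq hle hge.
by rewrite E hn.
Qed.
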